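(* Fix $\tau\in\mathbb N$ and assume $p_{A,\hat Y}(a,y)>0$ for all $(a,y)\in\mathcal A\times\mathcal Y$. Let $q^*$ be the partition returned by the greedy procedure on $n$ i.i.d. samples of $(A,\hat Y)$. Then $\hat u^{(q^* )}_{\mathrm{ind}}$ is a consistent estimator of $u^*$: for every $\epsilon>0$, $\Pr\big(|\hat u^{(q^* )}_{\mathrm{ind}}-u^*|>\epsilon\big)\to0$ as $n\to\infty$.
   Context: Let $\hat Y$ take values in a finite set $\mathcal Y$ and $A=(A_1,\dots,A_d)$, $A_k$ taking values in a finite set $\mathcal A_k$, $\mathcal A=\prod_k\mathcal A_k$. Write $p_{\hat Y\mid A}(y\mid a)=\Pr(\hat Y=y\mid A=a)$ and $u^*=\sup_{y\in\mathcal Y}\sup_{(a,a')\in\mathcal A^2}\big|\log\big(p_{\hat Y\mid A}(y\mid a)/p_{\hat Y\mid A}(y\mid a')\big)\big|$. For $t\subseteq[d]=\{1,\dots,d\}$ let $A_t=(A_k)_{k\in t}$ with values in $\mathcal A_t=\prod_{k\in t}\mathcal A_k$. Given i.i.d. samples $(A^{(i)},\hat Y^{(i)})_{i=1}^n$, let $N_{a_t,y}=\#\{i:A^{(i)}_t=a_t,\hat Y^{(i)}=y\}$, $N_{a_t}=\sum_y N_{a_t,y}$, and $\hat p(y\mid a_t)=N_{a_t,y}/N_{a_t}$. A partition $q$ of $[d]$ is feasible if $N_{a_t,y}>\tau$ for all $t\in q$, $a_t\in\mathcal A_t$, $y\in\mathcal Y$. For a feasible partition $q$, $\hat u^{(q)}_{\mathrm{ind}}=\sup_{y\in\mathcal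 Y}\sum_{t\in q}\sup_{(a_t,a_t')\in\mathcal A_t^2}\big|\log\big(\hat p(y\mid a_t)/\hat p(y\mid a_t')\big)\big|$. Greedy procedure: if the partition into singletons is not feasible, $q^*$ is the singleton partition and $\hat u^{(q^* )}_{\mathrm{ind}}$ is set to an arbitrary value; otherwise start with $q$ equal to the singleton partition and, as long as some partition obtained from $q$ by merging two distinct blocks $t_1,t_2\in q$ into $t_1\cup t_2$ is feasible, replace $q$ by such a feasible merged partition minimizing $\hat s^*$ (ties broken arbitrarily); when no feasible merge exists, output $q^*=q$. Here $\hat s^*(q)=(\hat\sigma_q^{2/3}+\hat\sigma_{y,q}^{2/3})^{3/2}$ where $\hat\sigma_q$ and $\hat\sigma_{y,q}$ are the standard deviations, under the empirical joint distribution $\hat p$ of $(A,\hat Y)$, of $\log\big(\hat p_A(A)/\prod_{t\in q}\hat p_{A_t}(A_t)\big)$ and $\log\big(\hat p_{A\mid\hat Y}(A\mid\hat Y)/\prod_{t\in q}\hat p_{A_t\mid\hat Y}(A_t\mid\hat Y)\big)$. *)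

(* Defs.v *)
From HB Require Import structures.
From mathcomp Require Import all_boot all_order all_algebra.
From mathcomp Require Import all_classical all_reals all_analysis.
Set Implicit Arguments. Unset Strict Implicit. Unset Printing Implicit Defensive.
Import Order.TTheory GRing.Theory Num.Theory.
Local Open Scope ring_scope.

Section Fairness.
Variable R : realType.
Variable d : nat.
Variable Ak : 'I_d -> finType.
Variable Y : finType.

Definition Aty := {dffun forall k : 'I_d, Ak k}.
Definition Asub (t : {set 'I_d}) :=
  {dffun forall k : {k : 'I_d | k \in t}, Ak (sval k)}.
Definition restr (t : {set 'I_d}) (a : Aty) : Asub t :=
  @finfun _ (fun k : {k : 'I_d | k \in t} => Ak (sval k)) (fun k => a (sval k)).

Definition Sample := (Aty * Y)%type.

Definition pcond (p : Aty -> Y -> R) (a : Aty) (y : Y) : R :=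
  p a y / \sum_(y' : Y) p a y'.

(* u^* ; sups over finite nonempty index sets of nonnegative reals *)
Definition ustar (p : Aty -> Y -> R) : R :=
  \big[Num.max/0]_(y : Y) \big[Num.max/0]_(a : Aty) \big[Num.max/0]_(a' : Aty)
    `|ln (pcond p a y / pcond p a' y)|.

Definition Pr_iid (p : Aty -> Y -> R) (n : nat) (E : n.-tuple Sample -> bool) : R :=
  \sum_(s : n.-tuple Sample | E s) \prod_(i < n) p (tnth s i).1 (tnth s i).2.

Section Empirical.
Variables (n : nat) (s : n.-tuple Sample).

Definition cnt_ty (t : {set 'I_d}) (b : Asub t) (y : Y) : nat :=
  #|[set i : 'I_n | (restr t (tnth s i).1 == b) && ((tnth s i).2 == y)]|.
Definition cnt_t (t : {set 'I_d}) (b : Asub t) : nat :=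
  #|[set i : 'I_n | restr t (tnth s i).1 == b]|.
Definition phat (t : {set 'I_d}) (b : Asub t) (y : Y) : R :=
  (cnt_ty b y)%:R / (cnt_t b)%:R.

Definition feasible (tau : nat) (q : {set {set 'I_d}}) : Prop :=
  forall t, t \in q -> forall (b : Asub t) (y : Y), (tau < cnt_ty b y)%N.

Definition uind (q : {set {set 'I_d}}) : R :=
  \big[Num.max/0]_(y : Y) \sum_(t in q)
     \big[Num.max/0]_(b : Asub t) \big[Num.max/0]_(b' : Asub t)
        `|ln (phat b y / phat b' y)|.

Definition cnt_ay (a : Aty) (y : Y) : nat := #|[set i : 'I_n | tnth s i == (a, y)]|.
Definition cnt_a (a : Aty) : nat := #|[set i : 'I_n | (tnth s i).1 == a]|.
Definition cnt_y (y : Y) : nat := #|[set i : 'I_n | (tnth s i).2 == y]|.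
Definition pemp (a : Aty) (y : Y) : R := (cnt_ay a y)%:R / n%:R.

Definition f_ind (q : {set {set 'I_d}}) (a : Aty) (y : Y) : R :=
  ln (((cnt_a a)%:R / n%:R) / \prod_(t in q) ((cnt_t (restr t a))%:R / n%:R)).
Definition f_cind (q : {set {set 'I_d}}) (a : Aty) (y : Y) : R :=
  ln (((cnt_ay a y)%:R / (cnt_y y)%:R) /
      \prod_(t in q) ((cnt_ty (restr t a) y)%:R / (cnt_y y)%:R)).

Definition emp_mean (f : Aty -> Y -> R) : R :=
  \sum_(a : Aty) \sum_(y : Y) pemp a y * f a y.
Definition emp_sd (f : Aty -> Y -> R) : R :=
  Num.sqrt (\sum_(a : Aty) \sum_(y : Y) pemp a y * (f a y - emp_mean f) ^+ 2).

Definition shat (q : {set {set 'I_d}}) : R :=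
  (emp_sd (f_ind q) `^ (2 / 3) + emp_sd (f_cind q) `^ (2 / 3)) `^ (3 / 2).

Definition merge (q : {set {set 'I_d}}) (t1 t2 : {set 'I_d}) : {set {set 'I_d}} :=
  (t1 :|: t2) |: ((q :\ t1) :\ t2).

Definition feasible_merge (tau : nat) (q q' : {set {set 'I_d}}) : Prop :=
  exists t1 t2, [/\ t1 \in q, t2 \in q, t1 != t2, q' = merge q t1 t2 & feasible tau q'].

Definition greedy_step (tau : nat) (q q' : {set {set 'I_d}}) : Prop :=
  feasible_merge tau q q' /\
  forall q'', feasible_merge tau q q'' -> shat q' <= shat q''.

(* greedy_run tau q r : starting from q, some run of the greedy procedure
   (with some tie-breaking) stops at r *)
Inductive greedy_run (tau : nat) : {set {set 'I_d}} -> {set {set 'I_d}} -> Prop :=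
| gr_stop q : (forall q', ~ feasible_merge tau q q') -> greedy_run tau q q
| gr_step q q' r : greedy_step tau q q' -> greedy_run tau q' r -> greedy_run tau q r.

End Empirical.

Definition singleton_part : {set {set 'I_d}} := [set [set k] | k : 'I_d].

End Fairness.

(* Main.v *)
Require Import Defs.
From HB Require Import structures.
From mathcomp Require Import all_boot all_order all_algebra.
From mathcomp Require Import all_classical all_reals all_analysis.
From mathcomp Require Import ring lra.
Import Order.TTheory GRing.Theory Num.Theory.
Local Open Scope ring_scope.

Section Gen.
Variable R : realType.

Lemma bm_ge (I : finType) (F : I -> R) i0 : F i0 <= \big[Num.max/0]_(i : I) F i.
Proof.
have := mem_index_enum i0; elim: (index_enum I) => [//|x s IH].
rewrite big_cons in_cons => /orP[/eqP<-|/IH h]; rewrite le_max ?lexx //.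
by rewrite h orbT.
Qed.

Lemma bm_le (I : finType) (F : I -> R) c : 0 <= c -> (forall i, F i <= c) ->
  \big[Num.max/0]_(i : I) F i <= c.
Proof.
move=> c0 h; elim/big_ind: _ => // x y hx hy; by rewrite ge_max hx hy.
Qed.

Lemma bm_ge0 (I : finType) (F : I -> R) : 0 <= \big[Num.max/0]_(i : I) F i.
Proof.
elim: (index_enum I) => [|x s IH]; first by rewrite big_nil.
by rewrite big_cons le_max IH orbT.
Qed.

End Gen.

Section Model.
Variable R : realType.
Variable d : nat.
Variable Ak : 'I_d -> finType.
Variable Y : finType.

Definition ext (t : {set 'I_d}) (b : Asub Ak t) (a0 : Aty Ak) : Aty Ak :=
  [ffun k => if @idP (k \in t) is ReflectT h then b (exist _ k h) else a0 k].

Arguments ext [t].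

Lemma restr_ext t b a0 : restr t (ext b a0) = b.
Proof.
apply/ffunP => -[k hk]; rewrite /restr ffunE /= /ext ffunE.
destruct idP as [h|h]; last by rewrite hk in h.
by rewrite (bool_irrelevance h hk).
Qed.

Lemma restrT_inj : injective (@restr d Ak [set: 'I_d]).
Proof.
move=> a a' /ffunP h; apply/ffunP => k.
by have := h (exist _ k (finset.in_setT k)); rewrite /restr !ffunE.
Qed.

Variable n : nat.
Variable s : n.-tuple (Sample Ak Y).

Lemma cnt_ty_ge t a y : (cnt_ay s a y <= cnt_ty s (restr t a) y)%N.
Proof.
apply: subset_leq_card; apply/fintype.subsetP => i; rewrite !inE => /eqP ->.
by rewrite !eqxx.
Qed.

Lemma all_feasible (a0 : Aty Ak) tau : (forall a y, tau < cnt_ay s a y)%N ->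
  forall q, feasible s tau q.
Proof.
move=> h q t _ b y.
rewrite -(restr_ext _ b a0); exact: leq_trans (h _ y) (cnt_ty_ge _ _ _).
Qed.

Lemma cnt_tyT a y : cnt_ty s (restr [set: 'I_d] a) y = cnt_ay s a y.
Proof.
apply: eq_card => i; rewrite !inE (inj_eq restrT_inj).
by case: (tnth s i) => a' y'; rewrite xpair_eqE.
Qed.

Lemma cnt_tT a : cnt_t s (restr [set: 'I_d] a) = (\sum_(y : Y) cnt_ay s a y)%N.
Proof.
rewrite /cnt_t /cnt_ay.
under eq_bigr => y _ do rewrite -sum1dep_card.
under eq_bigr => y _ do rewrite big_mkcond /=.
rewrite exchange_big /= -sum1dep_card big_mkcond /=.
apply: eq_bigr => i _; rewrite (inj_eq restrT_inj).
case: (tnth s i) => a' y' /=.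
rewrite (bigD1 y') //= big1 => [|z /negbTE hz]; last first.
  by rewrite xpair_eqE (eq_sym y') hz andbF.
by rewrite xpair_eqE eqxx andbT addn0.
Qed.

Lemma greedy_final tau (hall : forall q, feasible s tau q) q0 r :
  greedy_run R s tau q0 r -> (forall k, exists2 t, t \in q0 & k \in t) ->
  (forall k, exists2 t, t \in r & k \in t) /\
  (forall t1 t2, t1 \in r -> t2 \in r -> t1 = t2).
Proof.
elim => [q hstop | q q' r' [[t1 [t2 [h1 h2 hne -> _]]] _] _ IH] hcov.
  split => // t1 t2 h1 h2; apply/eqP; apply/negPn/negP => hne.
  apply: (hstop (Defs.merge q t1 t2)); exists t1, t2; split => //.
apply: IH => k; have [t ht hk] := hcov k.
case: (boolP ((t == t1) || (t == t2))) => [/orP[/eqP e|/eqP e]|].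
- by exists (t1 :|: t2); rewrite /Defs.merge ?setU11 // inE -e hk.
- by exists (t1 :|: t2); rewrite /Defs.merge ?setU11 // inE -e hk orbT.
- rewrite negb_or => /andP[n1 n2]; exists t => //.
  by rewrite /Defs.merge !inE n1 n2 ht orbT.
Qed.

End Model.

Section Anal.
Variable R : realType.

Lemma ln_bound (k x : R) : 1 < k -> k^-1 <= x <= k -> `|ln x| <= ln k.
Proof.
move=> k1 /andP[h1 h2].
have k0 : 0 < k := lt_trans ltr01 k1.
have x0 : 0 < x by apply: lt_le_trans h1; rewrite invr_gt0.
rewrite ler_norml; apply/andP; split.
  by rewrite -lnV ?posrE // ler_ln ?posrE ?invr_gt0.
by rewrite ler_ln ?posrE.
Qed.

Lemma ln_ratio (x y : R) : 0 < x -> 0 < y -> ln (x / y) = ln x - ln y.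
Proof. by move=> x0 y0; rewrite lnM ?posrE ?invr_gt0 // lnV ?posrE. Qed.

Lemma rb1 (u v k : R) : 0 < v -> 0 < k -> v / k <= u <= k * v -> k^-1 <= u / v <= k.
Proof.
move=> v0 k0 /andP[h1 h2].
by rewrite ler_pdivlMr // ler_pdivrMr // mulrC h1 h2.
Qed.

Lemma rb2 (u v k : R) : 0 < u -> 0 < k -> u / k <= v <= k * u -> k^-1 <= u / v <= k.
Proof.
move=> u0 k0 /andP[h1 h2].
have v0 : 0 < v by apply: lt_le_trans h1; rewrite divr_gt0.
rewrite ler_pdivlMr // ler_pdivrMr //.
rewrite -ler_pdivlMl ?invr_gt0 // invrK h2 /=.
by rewrite -ler_pdivrMl // mulrC.
Qed.

Variables (A Y : finType).

Lemma ln_compare (c p : A -> Y -> R) (m k : R) : 0 < m -> 1 < k ->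
  (forall a y, 0 < p a y) ->
  (forall a y, m * p a y / k <= c a y <= k * (m * p a y)) ->
  forall a a' y,
  `| `|ln ((c a y / \sum_(y' : Y) c a y') / (c a' y / \sum_(y' : Y) c a' y'))|
     - `|ln ((p a y / \sum_(y' : Y) p a y') / (p a' y / \sum_(y' : Y) p a' y'))| |
   <= 4 * ln k.
Proof.
move=> m0 k1 p0 hc a0 a0' y0.
have k0 : 0 < k := lt_trans ltr01 k1.
have c0 a y : 0 < c a y.
  have /andP[h _] := hc a y; apply: lt_le_trans h.
  by rewrite divr_gt0 // mulr_gt0.
have Sp0 a : 0 < \sum_(y' : Y) p a y'.
  rewrite (bigD1 y0) //=; have := p0 a y0.
  have : 0 <= \sum_(i | i != y0) p a i by apply: sumr_ge0 => i _; apply: ltW.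
  lra.
have Sc0 a : 0 < \sum_(y' : Y) c a y'.
  rewrite (bigD1 y0) //=; have := c0 a y0.
  have : 0 <= \sum_(i | i != y0) c a i by apply: sumr_ge0 => i _; apply: ltW.
  lra.
pose rho a y := (c a y / \sum_(y' : Y) c a y') / (p a y / \sum_(y' : Y) p a y').
have rho0 a y : 0 < rho a y.
  by rewrite /rho !divr_gt0.
have hrho a y : `|ln (rho a y)| <= 2 * ln k.
  have -> : rho a y = (c a y / (m * p a y)) *
              ((m * \sum_(y' : Y) p a y') / \sum_(y' : Y) c a y').
    rewrite /rho; field.
    by rewrite !gt_eqF ?mulr_gt0 //.
  rewrite lnM ?posrE ?divr_gt0 ?mulr_gt0 //.
  apply: le_trans (ler_normD _ _) _.
  have -> : 2 * ln k = ln k + ln k by ring.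
  apply: lerD; apply: ln_bound => //.
    by apply: rb1; rewrite ?mulr_gt0.
  apply: rb2; rewrite ?mulr_gt0 //; apply/andP; split.
    rewrite mulr_sumr mulr_suml; apply: ler_sum => y' _.
    by have /andP[] := hc a y'.
  rewrite mulr_sumr mulr_sumr; apply: ler_sum => y' _.
  by have /andP[] := hc a y'.
set cr := (c a0 y0 / _ / _).
set pr := (p a0 y0 / _ / _).
have cr0 : 0 < cr by rewrite /cr !divr_gt0.
have pr0 : 0 < pr by rewrite /pr !divr_gt0.
have e : ln cr = ln pr + ln (rho a0 y0) - ln (rho a0' y0).
  have -> : cr = pr * (rho a0 y0 / rho a0' y0).
    rewrite /cr /pr /rho; field.
    by rewrite !gt_eqF.
  by rewrite lnM ?posrE ?divr_gt0 // ln_ratio // addrA.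
apply: le_trans (ler_dist_dist _ _) _; rewrite e.
have -> : ln pr + ln (rho a0 y0) - ln (rho a0' y0) - ln pr =
   ln (rho a0 y0) - ln (rho a0' y0) by ring.
apply: le_trans (ler_normB _ _) _.
have := hrho a0 y0; have := hrho a0' y0; lra.
Qed.

End Anal.

Section Var.
Variable R : realType.

Lemma prod_sum_tuple (T : finType) n (F : 'I_n -> T -> R) :
  \sum_(s : n.-tuple T) \prod_(i < n) F i (tnth s i) = \prod_(i < n) \sum_(x : T) F i x.
Proof.
rewrite bigA_distr_bigA /=.
rewrite (reindex (fun f : {ffun 'I_n -> T} => [tuple f i | i < n])) /=.
  by apply: eq_bigr => f _; apply: eq_bigr => i _; rewrite tnth_mktuple.
exists (fun s : n.-tuple T => [ffun i => tnth s i]) => [f _|s _].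
  by apply/ffunP => i; rewrite ffunE tnth_mktuple.
by apply: eq_from_tnth => i; rewrite tnth_mktuple ffunE.
Qed.

Lemma prod_if1 n (i : 'I_n) (f : 'I_n -> R) :
  \prod_(k < n) (if k == i then f k else 1) = f i.
Proof. by rewrite -big_mkcond big_pred1_eq. Qed.

Variables (T : finType) (P : T -> R) (x0 : T).
Hypothesis P0 : forall x, 0 <= P x.
Hypothesis P1 : \sum_x P x = 1.

Lemma variance_bound n :
  \sum_(s : n.-tuple T) (\prod_(i < n) P (tnth s i)) *
     (\sum_(i < n) (((tnth s i == x0)%:R - P x0))) ^+ 2 <= n%:R.
Proof.
pose D x : R := (x == x0)%:R - P x0.
have PD : \sum_x P x * D x = 0.
  rewrite /D; under eq_bigr => x _ do rewrite mulrBr.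
  rewrite sumrB -mulr_suml P1 mul1r (bigD1 x0) //= eqxx mulr1 big1 ?addr0 ?subrr //.
  by move=> x /negbTE ->; rewrite mulr0.
have Px0 : P x0 <= 1.
  rewrite -P1 (bigD1 x0) //= lerDl; exact: sumr_ge0.
have PDD : \sum_x P x * D x ^+ 2 <= 1.
  rewrite -P1; apply: ler_sum => x _.
  rewrite -[X in _ <= X]mulr1.
  apply: ler_wpM2l => //; rewrite /D.
  have := P0 x0; case: (x == x0) => /=; nra.
have key : forall (s : n.-tuple T), (\prod_(i < n) P (tnth s i)) *
     (\sum_(i < n) D (tnth s i)) ^+ 2 =
   \sum_(i < n) \sum_(j < n) \prod_(k < n)
      (P (tnth s k) * ((if k == i then D (tnth s k) else 1) *
                       (if k == j then D (tnth s k) else 1))).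
  move=> s; rewrite expr2 mulr_suml mulr_sumr; apply: eq_bigr => i _.
  rewrite mulr_sumr mulr_sumr; apply: eq_bigr => j _.
  by rewrite big_split /= big_split /= !prod_if1; ring.
rewrite (eq_bigr _ (fun s _ => key s)) exchange_big /=.
apply: (@le_trans _ _ (\sum_(i < n) (1:R))); last first.
  by rewrite sumr_const card_ord.
apply: ler_sum => i _; rewrite exchange_big /= (bigD1 i) //= [X in _ + X]big1 ?addr0.
  rewrite (@prod_sum_tuple T n (fun k x => P x * ((if k == i then D x else 1) *
            (if k == i then D x else 1)))) (bigD1 i) //= eqxx.
  rewrite [X in _ * X]big1 ?mulr1.
    by apply: le_trans PDD; rewrite le_eqVlt; apply/orP; left; apply/eqP;
       apply: eq_bigr => x _; rewrite expr2.
  move=> k /negbTE hk; rewrite hk.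
  by under eq_bigr => x _ do rewrite mulr1 mulr1; exact: P1.
move=> j hj; rewrite (@prod_sum_tuple T n (fun k x => P x * ((if k == i then D x else 1) *
            (if k == j then D x else 1)))) (bigD1 i) //= eqxx.
rewrite eq_sym (negbTE hj).
under eq_bigr => x _ do rewrite mulr1.
by rewrite PD mul0r.
Qed.
End Var.

Arguments bm_ge {R I} F i0.
Arguments bm_le {R I} F c.
Arguments bm_ge0 {R I} F.
Arguments restr_ext {d Ak t} b a0.
Arguments all_feasible {d Ak Y n} s a0 tau.
Arguments cnt_tyT {d Ak Y n} s a y.
Arguments cnt_tT {d Ak Y n} s a.
Arguments greedy_final {R d Ak Y n s tau}.
Arguments ln_compare {R A Y} c p m k.
Arguments variance_bound {R T} P x0.

Lemma aux1 (R : realType) (u v c e : R) : u <= c -> v - u <= e -> v <= c + e.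
Proof. lra. Qed.
Lemma aux2 (R : realType) (u v c e : R) : v <= c -> - e <= v - u -> u <= c + e.
Proof. lra. Qed.
Lemma aux3 (R : realType) (u v e : R) : u <= v + e -> v <= u + e -> `|u - v| <= e.
Proof. by move=> h1 h2; rewrite ler_norml; apply/andP; split; lra. Qed.

Local Open Scope classical_set_scope.

Theorem theorem3 (R : realType) (d : nat) (Ak : 'I_d -> finType) (Y : finType)
  (p : Aty Ak -> Y -> R) (tau : nat)
  (p_pos : forall a y, 0 < p a y)
  (p_sum : \sum_(a : Aty Ak) \sum_(y : Y) p a y = 1)
  (est : forall n : nat, n.-tuple (Sample Ak Y) -> R)
  (est_greedy : forall (n : nat) (s : n.-tuple (Sample Ak Y)),
      feasible s tau (singleton_part d) ->
      exists q, greedy_run R s tau (singleton_part d) q /\ est n s = uind R s q) :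
  forall eps : R, 0 < eps ->
    (fun n : nat => Pr_iid p (fun s : n.-tuple (Sample Ak Y) => eps < `|est n s - ustar p|))
      @ \oo --> 0.
Proof.
move=> eps eps0.
pose P (x : Sample Ak Y) := p x.1 x.2.
have P0 x : 0 < P x by apply: p_pos.
have P1 : \sum_x P x = 1 by rewrite -p_sum pair_bigA.
have [a0 _] : exists a0 : Aty Ak, True.
  case: (pickP (@predT (Aty Ak))) => [a0 _|h]; first by exists a0.
  by move: p_sum; rewrite big_pred0 // => /esym/eqP; rewrite oner_eq0.
pose k := expR (eps / 8).
have k1 : 1 < k by rewrite expR_gt1 divr_gt0.
have k0 : 0 < k := lt_trans ltr01 k1.
have lnk : ln k = eps / 8 by rewrite expRK.
have ki1 : k^-1 < 1 by rewrite invf_lt1.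
have ki0 : 0 < k^-1 by rewrite invr_gt0.
have kk : 2 - k^-1 <= k.
  have e : (k - 1) ^+ 2 * k^-1 = k - 2 + k^-1.
    by field; rewrite gt_eqF.
  have := mulr_ge0 (sqr_ge0 (k - 1)) (ltW ki0); rewrite e; lra.
pose del x := P x * (1 - k^-1).
have del0 x : 0 < del x by rewrite mulr_gt0 // subr_gt0.
pose C := \sum_x (del x ^+ 2)^-1.
have C0 : 0 <= C by apply: sumr_ge0 => x _; rewrite invr_ge0 sqr_ge0.
pose M := \sum_x tau%:R * k / P x.
have M0 : 0 <= M by apply: sumr_ge0 => x _; apply: divr_ge0; [apply: mulr_ge0 => //; exact: ltW|exact: ltW].
pose N0 := (Num.Def.archi_bound M).+1.
pose Z n (s : n.-tuple (Sample Ak Y)) x := \sum_(i < n) ((tnth s i == x)%:R - P x).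
have cntZ n s a y : (cnt_ay s a y)%:R = Z n s (a, y) + n%:R * P (a, y).
  rewrite /Z sumrB sumr_const card_ord mulr_natl subrK /cnt_ay.
  rewrite -sum1dep_card big_mkcond /= natr_sum; apply: eq_bigr => i _.
  by case: (_ == _).
have DET n s : (N0 <= n)%N -> (forall x, `|Z n s x| < n%:R * del x) ->
    `|est n s - ustar p| <= eps / 2.
  move=> hn hZ.
  have n1 : 1 <= n%:R :> R by rewrite ler1n; exact: leq_trans (ltn0Sn _) hn.
  have n0 : 0 < n%:R :> R by lra.
  have hcs a y : n%:R * p a y / k < (cnt_ay s a y)%:R <= k * (n%:R * p a y).
    have := hZ (a, y); rewrite cntZ /del /P /=.
    set z := Z n s (a, y); set q := p a y.
    have q0 : 0 < n%:R * q by rewrite mulr_gt0 //; apply: p_pos.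
    have := ler_wpM2l (ltW q0) kk.
    rewrite ltr_norml => h1 /andP[h2 h3].
    apply/andP; split; first by move: h2; rewrite /z; lra.
    move: h1 h3; rewrite /z; nra.
  have ctau a y : (tau < cnt_ay s a y)%N.
    rewrite -(ltr_nat R); apply: le_lt_trans (andP (hcs a y)).1.
    have hM : tau%:R * k / P (a, y) <= n%:R.
      apply: le_trans (_ : M <= n%:R).
        rewrite /M (bigD1 (a, y)) //= lerDl; apply: sumr_ge0 => x _.
        by apply: divr_ge0; [apply: mulr_ge0 => //; exact: ltW|exact: ltW].
      apply: le_trans (ltW (archi_boundP M0)) _; rewrite ler_nat.
      exact: leq_trans (leqnSn _) hn.
    rewrite ler_pdivrMr ?P0 // in hM.
    by rewrite ler_pdivlMr.
  have feas := all_feasible s a0 tau ctau.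
  have [q [hrun hest]] := est_greedy n s (feas _).
  have cov0 : forall j, exists2 t, t \in singleton_part d & j \in t.
    move=> j; exists [set j]%SET; last by rewrite set11.
    by apply/imsetP; exists j.
  have [hcov huniq] := greedy_final feas _ _ hrun cov0.
  rewrite hest.
  pose Tp y a a' := `|ln (pcond p a y / pcond p a' y)|.
  have hV y a a' : Tp y a a' <= ustar p.
    have h1 := bm_ge (fun a' => Tp y a a') a'.
    have h2 := bm_ge (fun a => \big[Num.max/0]_(a' : Aty Ak) Tp y a a') a.
    have h3 := bm_ge (fun y => \big[Num.max/0]_(a : Aty Ak)
                 \big[Num.max/0]_(a' : Aty Ak) Tp y a a') y.
    exact: le_trans h1 (le_trans h2 h3).
  have V0 : 0 <= ustar p by apply: bm_ge0.
  case: (set_0Vmem q) => [q0|[t ht]].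
    have nod : 'I_d -> False.
      by move=> j; have [t] := hcov j; rewrite q0 inE.
    have -> : uind R s q = 0.
      apply/le_anti/andP; split; last exact: bm_ge0.
      apply: bm_le => // y; rewrite q0 big_set0 //.
    have -> : ustar p = 0.
      apply/le_anti/andP; split => //.
      apply: bm_le => // y; apply: bm_le => // a; apply: bm_le => // a'.
      have -> : a' = a by apply/ffunP => j; case: (nod j).
      have pc0 : 0 < pcond p a y.
        rewrite /pcond divr_gt0 ?p_pos //.
        rewrite (bigD1 y) //=; apply: lt_le_trans (p_pos a y) _.
        by rewrite lerDl; apply: sumr_ge0 => i _; apply: ltW.
      by rewrite divff ?gt_eqF // ln1 normr0.
    by rewrite subrr normr0 divr_ge0 // ltW.
  have tT : t = [set: 'I_d]%SET.
    apply/setP => j; rewrite inE; have [t' ht' hj] := hcov j.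
    by rewrite (huniq _ _ ht ht').
  have qT : q = [set [set: 'I_d]]%SET.
    apply/setP => t'; rewrite inE -tT; apply/idP/eqP => [h|->//].
    exact: huniq.
  pose Tc y (b b' : Asub Ak [set: 'I_d]%SET) :=
    `|ln (phat R s b y / phat R s b' y)|.
  have hcs' a y : n%:R * p a y / k <= (cnt_ay s a y)%:R <= k * (n%:R * p a y).
    by have /andP[h1 h2] := hcs a y; rewrite h2 ltW.
  have TL a a' y : `|Tc y (restr [set: 'I_d]%SET a) (restr [set: 'I_d]%SET a')
                     - Tp y a a'| <= eps / 2.
    have := ln_compare (fun a y => (cnt_ay s a y)%:R) p n%:R k n0 k1 p_pos hcs' a a' y.
    rewrite lnk /Tc /Tp /phat !cnt_tyT !cnt_tT !natr_sum /pcond => h.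
    apply: le_trans h _; rewrite le_eqVlt; apply/orP; left; apply/eqP.
    by field.
  pose U := \big[Num.max/0]_(y : Y) \big[Num.max/0]_(b : Asub Ak [set: 'I_d]%SET)
            \big[Num.max/0]_(b' : Asub Ak [set: 'I_d]%SET) Tc y b b'.
  have hU y b b' : Tc y b b' <= U.
    have h1 := bm_ge (fun b' => Tc y b b') b'.
    have h2 := bm_ge (fun b => \big[Num.max/0]_(b' : Asub Ak [set: 'I_d]%SET) Tc y b b') b.
    have h3 := bm_ge (fun y => \big[Num.max/0]_(b : Asub Ak [set: 'I_d]%SET)
                 \big[Num.max/0]_(b' : Asub Ak [set: 'I_d]%SET) Tc y b b') y.
    exact: le_trans h1 (le_trans h2 h3).
  have U0 : 0 <= U by apply: bm_ge0.
  have -> : uind R s q = U.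
    rewrite qT /uind /U; apply: eq_bigr => y _; by rewrite big_set1.
  have e2 : 0 <= eps / 2 by rewrite divr_ge0 // ltW.
  have h1 : U <= ustar p + eps / 2.
    apply: bm_le => [|y]; first exact: addr_ge0.
    apply: bm_le => [|b]; first exact: addr_ge0.
    apply: bm_le => [|b']; first exact: addr_ge0.
    rewrite -(restr_ext b a0) -(restr_ext b' a0).
    have := TL (ext _ _ _ b a0) (ext _ _ _ b' a0) y.
    have := hV y (ext _ _ _ b a0) (ext _ _ _ b' a0).
    move=> hv h; rewrite ler_norml in h; case/andP: h => _ hh.
    exact: aux1 hv hh.
  have h2 : ustar p <= U + eps / 2.
    apply: bm_le => [|y]; first exact: addr_ge0.
    apply: bm_le => [|a]; first exact: addr_ge0.
    apply: bm_le => [|a']; first exact: addr_ge0.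
    have := TL a a' y.
    have := hU y (restr [set: 'I_d]%SET a) (restr [set: 'I_d]%SET a').
    move=> hu h; rewrite ler_norml in h; case/andP: h => hh _.
    exact: aux2 hu hh.
  exact: aux3 h1 h2.
have CH n : (N0 <= n)%N ->
  Pr_iid p (fun s : n.-tuple (Sample Ak Y) => eps < `|est n s - ustar p|) <= C / n%:R.
  move=> hn.
  have n1 : 1 <= n%:R :> R by rewrite ler1n; exact: leq_trans (ltn0Sn _) hn.
  have n0 : 0 < n%:R :> R by lra.
  pose w (s : n.-tuple (Sample Ak Y)) := \prod_(i < n) P (tnth s i).
  pose B (s : n.-tuple (Sample Ak Y)) := \sum_x Z n s x ^+ 2 / (n%:R * del x) ^+ 2.
  have w0 s : 0 <= w s by apply: prodr_ge0 => i _; apply: ltW.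
  have B0 s : 0 <= B s.
    by apply: sumr_ge0 => x _; apply: divr_ge0; apply: sqr_ge0.
  apply: (@le_trans _ _ (\sum_s w s * B s)).
    rewrite /Pr_iid big_mkcond /=; apply: ler_sum => s _; case: ifP => hb; last first.
      exact: mulr_ge0.
    have -> : \prod_(i < n) p (tnth s i).1 (tnth s i).2 = w s by [].
    have B1 : 1 <= B s.
      case: (boolP [forall x, `|Z n s x| < n%:R * del x]) => [/forallP h|/forallPn [x hx]].
        by move: hb; have := DET n s hn h; lra.
      rewrite -leNgt in hx.
      rewrite /B (bigD1 x) //=.
      have : 0 <= \sum_(i | i != x) Z n s i ^+ 2 / (n%:R * del i) ^+ 2.
        by apply: sumr_ge0 => i _; apply: divr_ge0; apply: sqr_ge0.
      have : 1 <= Z n s x ^+ 2 / (n%:R * del x) ^+ 2.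
        rewrite ler_pdivlMr ?exprn_gt0 ?mulr_gt0 ?subr_gt0 //.
        rewrite -[Z n s x ^+ 2]real_normK ?num_real //.
        have := mulr_gt0 n0 (del0 x); nra.
      lra.
    have := w0 s; nra.
  have e : \sum_s w s * B s =
      \sum_x ((n%:R * del x) ^+ 2)^-1 * \sum_s w s * Z n s x ^+ 2.
    rewrite /B; under eq_bigr => s _ do rewrite mulr_sumr.
    rewrite exchange_big /=; apply: eq_bigr => x _; rewrite mulr_sumr.
    by apply: eq_bigr => s _; rewrite [Z n s x ^+ 2 / _]mulrC mulrCA.
  rewrite e /C mulr_suml; apply: ler_sum => x _.
  have V := variance_bound P x (fun y => ltW (P0 y)) P1 n.
  apply: le_trans (ler_wpM2l _ V) _; first by rewrite invr_ge0 sqr_ge0.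
  rewrite le_eqVlt; apply/orP; left; apply/eqP; field.
  by rewrite !gt_eqF.
apply: (@squeeze_cvgr _ _ _ _ (fun n => 0 * harmonic n) (fun n => 2 * C * harmonic n)).
- exists N0 => // n /= hn; apply/andP; split; first rewrite mul0r.
    by apply: sumr_ge0 => s _; apply: prodr_ge0 => i _; apply: ltW.
  apply: le_trans (CH n hn) _.
  have n1 : 1 <= n%:R :> R by rewrite ler1n; exact: leq_trans (ltn0Sn _) hn.
  rewrite /= -subr_ge0.
  have -> : 2 * C * (n.+1)%:R^-1 - C / n%:R = C * (n%:R - 1) / (n%:R * (n%:R + 1)).
    rewrite -natr1; field.
    by rewrite !gt_eqF //; apply: lt_le_trans ltr01 _ => //; lra.
  apply: divr_ge0; [apply: mulr_ge0 => //; lra | apply: mulr_ge0; lra].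
- by rewrite -[X in _ --> X](mulr0 (0:R)); apply: cvgMl_tmp; exact: cvg_harmonic.
- by rewrite -(mulr0 (2 * C)); apply: cvgMl_tmp; exact: cvg_harmonic.
Qed.
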